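(* Let $k\ge 2$ and $N\ge 1$ be integers such that neither $N<k$ nor $k\mid N$. Suppose there exist positive integers $A,B$ such that $(A)_k$ and $(B)_k$ are palindromes and $A/B=N$. Then, for the smallest such $A$, $$|(A)_k| \le 2\left(\lceil \log_k N\rceil + k^{\lceil \log_k N\rceil}\, N^2 + \left\lceil \frac{\log_k N}{2}\right\rceil\right)+1.$$
   Context: For an integer $n\ge1$ and base $k\ge 2$, $(n)_k$ denotes the base-$k$ representation of $n$ (most significant digit first, no leading zeros), and $|(n)_k|$ its length (number of digits). A string is a palindrome if it reads the same forwards and backwards. *)

(* Defs.v *)
From mathcomp Require Import all_boot.

Fixpoint digits_rev_aux (k n fuel : nat) : seq nat :=
  match fuel with
  | 0 => [::]
  | fuel'.+1 => if n == 0 then [::] else (n %% k) :: digits_rev_aux k (n %/ k) fuel'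
  end.

(* (n)_k : base-k representation, most significant digit first, no leading
   zeros (for n >= 1 and k >= 2; fuel n suffices since each step divides by k). *)
Definition base_digits (k n : nat) : seq nat := rev (digits_rev_aux k n n).

Definition base_len (k n : nat) : nat := size (base_digits k n).

Definition palindrome (s : seq nat) : bool := rev s == s.

Definition good_pair (k N A : nat) : Prop :=
  0 < A /\ exists B, 0 < B /\ palindrome (base_digits k A) /\
                     palindrome (base_digits k B) /\ A = N * B.

(* Main.v *)
Require Import Defs.
From mathcomp Require Import all_boot zify.

Lemma modn_mul_split X a b : 0 < a -> 0 < b ->
  X %% (a * b) = (X %/ a %% b) * a + X %% a.
Proof.
move=> ha hb.
have h1 := divn_eq X a. have h2 := divn_eq (X %/ a) b.
rewrite {1}h1 {1}h2 mulnDl -mulnA (mulnC b a) -addnA modnMDl modn_small //.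
have := ltn_pmod (X %/ a) hb; have := ltn_pmod X ha.
set q := _ %% b; set r := _ %% a => Hr Hq.
apply: (@leq_trans (q * a + a)); first by rewrite ltn_add2l.
by rewrite -mulSnr mulnC leq_mul2l Hq orbT.
Qed.

Definition dig (k i X : nat) := X %/ k ^ i %% k.
Definition cut1 (k X j e : nat) := X %/ k ^ (j + e) * k ^ j + X %% k ^ j.

Lemma dig_mod k i X : 1 < k -> dig k i X = X %% k ^ i.+1 %/ k ^ i.
Proof.
move=> hk; have hk0 : 0 < k by lia.
have hki : 0 < k ^ i by rewrite expn_gt0 hk0.
by rewrite expnSr (@modn_mul_split X _ _ hki hk0) divnMDl // (divn_small (ltn_pmod X hki)) addn0.
Qed.

Lemma modn_hi k H r i j : 1 < k -> i <= j ->
  (H * k ^ j + r) %% k ^ i = r %% k ^ i.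
Proof.
move=> hk hij; by rewrite -(subnK hij) expnD mulnA modnMDl.
Qed.

Lemma dig_cut1 k X j e i : 1 < k ->
  dig k i (cut1 k X j e) = if i < j then dig k i X else dig k (i + e) X.
Proof.
move=> hk; have hk0 : 0 < k by lia.
have hkp : forall t, 0 < k ^ t by move=> t; rewrite expn_gt0 hk0.
rewrite /cut1; case: ifP => hij.
  rewrite !dig_mod // modn_hi //.
  by rewrite modn_dvdm // dvdn_exp2l.
rewrite /dig.
have hji : j <= i by lia.
have -> : k ^ i = k ^ j * k ^ (i - j) by rewrite -expnD subnKC.
rewrite divnMA divnMDl // (divn_small (ltn_pmod X (hkp j))) addn0.
by rewrite -divnMA -expnD; congr (_ %/ k ^ _ %% _); lia.
Qed.

Lemma cut1_lt k X j e L : 1 < k -> X < k ^ L -> j + e <= L ->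
  cut1 k X j e < k ^ (L - e).
Proof.
move=> hk hX hjl; have hk0 : 0 < k by lia.
have hkp : forall t, 0 < k ^ t by move=> t; rewrite expn_gt0 hk0.
rewrite /cut1.
have h1 : X %/ k ^ (j + e) < k ^ (L - e - j).
  rewrite ltn_divLR // -expnD; congr (_ < k ^ _): hX; lia.
apply: (@leq_trans (X %/ k ^ (j + e) * k ^ j + k ^ j)).
  by rewrite ltn_add2l ltn_pmod.
rewrite -mulSnr.
apply: (leq_trans (leq_mul h1 (leqnn (k ^ j)))).
by rewrite -expnD; have -> : L - e - j + j = L - e by lia.
Qed.

Definition car (k N B i : nat) := N * (B %% k ^ i) %/ k ^ i.

Lemma car_hi k N B i : 1 < k -> (N * B) %/ k ^ i = N * (B %/ k ^ i) + car k N B i.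
Proof.
move=> hk; have hkp : 0 < k ^ i by rewrite expn_gt0; lia.
by rewrite {1}(divn_eq B (k ^ i)) mulnDr mulnA divnMDl.
Qed.

Lemma car_lo k N B i : 1 < k -> N * (B %% k ^ i) = (N * B) %% k ^ i + car k N B i * k ^ i.
Proof.
move=> hk; rewrite /car addnC -modnMmr.
exact: divn_eq.
Qed.

Lemma car_lt k N B i : 1 < k -> 0 < N -> car k N B i < N.
Proof.
move=> hk hN; have hkp : 0 < k ^ i by rewrite expn_gt0; lia.
by rewrite /car ltn_divLR // ltn_pmul2l // ltn_pmod.
Qed.

Lemma car_cut k N B i j e : 1 < k -> i <= j -> car k N (cut1 k B j e) i = car k N B i.
Proof.
move=> hk hij; by rewrite /car /cut1 modn_hi // modn_dvdm // dvdn_exp2l.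
Qed.

Lemma cut_mul k N A B j e s : 1 < k -> A = N * B ->
  (A %/ k ^ (j + e)) %% k ^ s = (A %/ k ^ j) %% k ^ s ->
  car k N B (j + e) = car k N B j ->
  cut1 k A (j + s) e = N * cut1 k B j e.
Proof.
move=> hk hAB hw hc.
have hkp : forall t, 0 < k ^ t by move=> t; rewrite expn_gt0; lia.
have E1 : A %/ k ^ (j + e) = A %/ k ^ (j + s + e) * k ^ s + (A %/ k ^ (j + e)) %% k ^ s.
  rewrite {1}(divn_eq (A %/ k ^ (j + e)) (k ^ s)) -divnMA -expnD.
  by have -> : j + e + s = j + s + e by lia.
have E2 : A %% k ^ (j + s) = (A %/ k ^ j %% k ^ s) * k ^ j + A %% k ^ j.
  by rewrite expnD modn_mul_split.
have E3 := car_hi k N B (j + e) hk. rewrite -hAB in E3.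
have E4 := car_lo k N B j hk. rewrite -hAB in E4.
rewrite hw in E1; rewrite hc in E3.
rewrite /cut1 E2 (expnD k j s).
move: E1 E3 E4; clear hAB hw hc E2.
move: (A %/ k ^ (j + s + e)) => X.
move: (A %/ k ^ (j + e)) => q.
move: ((A %/ k ^ j) %% k ^ s) => r0.
move: (B %/ k ^ (j + e)) => b1.
move: (B %% k ^ j) => bj.
move: (A %% k ^ j) => aj.
move: (car k N B j) => c0.
move: (k ^ j) (k ^ s) => Kj Ks.
move=> E1 E3 E4.
rewrite mulnDr mulnA E4.
have hb : N * b1 = X * Ks + r0 - c0 by lia.
have hle : c0 <= X * Ks + r0 by lia.
rewrite mulnA hb mulnBl !mulnDl (mulnAC X Kj Ks).
have : c0 * Kj <= X * Ks * Kj + r0 * Kj by rewrite -mulnDl leq_mul2r hle orbT.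
lia.
Qed.

Lemma dra k f : 1 < k -> forall n L, n <= f -> n < k ^ L -> (0 < L -> k ^ L.-1 <= n) ->
  digits_rev_aux k n f = mkseq (fun i => dig k i n) L.
Proof.
move=> hk; have hk0 : 0 < k by lia.
elim: f => [|f IH] n L hnf hnL hL.
  have hn0 : n = 0 by lia.
  case: L hnL hL => [|L] //= _ h; subst n.
  by have := h isT; rewrite leqn0 expn_eq0; lia.
case: (posnP n) => hn.
  subst n; case: L hnL hL => [|L] //= _ h.
  by have := h isT; rewrite leqn0 expn_eq0; lia.
case: L hnL hL => [|L] hnL hL; first by move: hnL; rewrite expn0; lia.
rewrite /= (negbTE (lt0n_neq0 hn)) /mkseq /= /dig expn0 divn1; congr (_ :: _).
rewrite -/(mkseq _ L) (IH (n %/ k) L).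
- rewrite /mkseq (_ : 1 = 1 + 0) // iotaDl -map_comp; apply: eq_map => i /=.
  by rewrite /dig -divnMA -expnS.
- have := ltn_Pdiv hk hn; lia.
- by rewrite ltn_divLR // -expnSr.
- move=> hL0; rewrite leq_divRL // -expnSr; have := hL isT.
  by rewrite /= prednK.
Qed.

Definition pal (k L X : nat) := forall i, i < L -> dig k i X = dig k (L - i.+1) X.

Lemma bd_spec k X L : 1 < k -> 0 < L -> k ^ L.-1 <= X -> X < k ^ L ->
  base_len k X = L /\ (palindrome (base_digits k X) <-> pal k L X).
Proof.
move=> hk hL hlo hhi.
have E : base_digits k X = rev (mkseq (fun i => dig k i X) L).
  by rewrite /base_digits (@dra k X hk X L (leqnn X) hhi (fun _ => hlo)).
rewrite /base_len E size_rev size_mkseq; split; first by [].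
rewrite /palindrome revK.
set s := mkseq _ L.
have hs : size s = L by rewrite size_mkseq.
have hn : forall i, i < L -> nth 0 (rev s) i = dig k (L - i.+1) X.
  move=> i hi; rewrite nth_rev hs; last by [].
  by rewrite nth_mkseq; last lia.
have hn' : forall i, i < L -> nth 0 s i = dig k i X.
  by move=> i hi; rewrite nth_mkseq.
split.
- move/eqP => h i hi.
  by rewrite -(hn' i hi) -(hn i hi) -h.
- move=> h; apply/eqP; apply: (@eq_from_nth _ 0); first by rewrite size_rev.
  move=> i; rewrite hs => hi.
  by rewrite (hn' i hi) (hn i hi) h.
Qed.

Lemma pigeon S (f : nat -> nat) : (forall i, i <= S -> f i < S) ->
  exists i j, i < j <= S /\ f i = f j.
Proof.
move=> hf.
case: (boolP [exists i : 'I_S.+1, exists j : 'I_S.+1, (i < j) && (f i == f j)]).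
  case/existsP => i /existsP [j /andP [hij /eqP he]].
  exists i, j; split => //; rewrite hij /=; by have := ltn_ord j.
move=> hn; exfalso.
pose g (i : 'I_S.+1) : 'I_S := Ordinal (hf i (ltn_ord i)).
have ginj : injective g.
  move=> x y /(congr1 val) /= hxy; apply/val_inj => /=.
  case: (ltngtP x y) => // hxy'.
  - by move: hn; move/existsPn/(_ x)/existsPn/(_ y); rewrite hxy' hxy eqxx.
  - by move: hn; move/existsPn/(_ y)/existsPn/(_ x); rewrite hxy' hxy eqxx.
have := leq_card g ginj; rewrite !card_ord; lia.
Qed.

Definition goodL k L X := [/\ 0 < L, k ^ L.-1 <= X, X < k ^ L & pal k L X].

Lemma topdig k L X : 1 < k -> 0 < L -> k ^ L.-1 <= X -> X < k ^ L -> dig k L.-1 X != 0.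
Proof.
move=> hk hL hlo hhi; have hkp : forall t, 0 < k ^ t by move=> t; rewrite expn_gt0; lia.
rewrite /dig modn_small.
  by rewrite -lt0n leq_divRL // mul1n.
by rewrite ltn_divLR // -expnS prednK.
Qed.

Lemma cut2_good k X L p p' : 1 < k -> goodL k L X -> 1 <= p -> p < p' -> 2 * p' <= L ->
  goodL k (L - 2 * (p' - p)) (cut1 k (cut1 k X (L - p') (p' - p)) p (p' - p)).
Proof.
move=> hk [hL hlo hhi hpal] hp hpp hpL.
set d := p' - p. set Y := cut1 k X (L - p') d. set Z := cut1 k Y p d.
have hdig : forall i, dig k i Z = if i < p then dig k i X else
   if i + d < L - p' then dig k (i + d) X else dig k (i + d + d) X.
  move=> i; rewrite /Z dig_cut1 //; case: (ltnP i p) => hip.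
    by rewrite /Y dig_cut1 // ifT //; lia.
  by rewrite /Y dig_cut1.
have hY : Y < k ^ (L - d) by apply: cut1_lt => //; lia.
have hZ : Z < k ^ (L - d - d) by apply: cut1_lt => //; lia.
have -> : L - 2 * d = L - d - d by lia.
have htop : dig k (L - d - d).-1 Z != 0.
  rewrite hdig ifF; last by lia.
  rewrite ifF; last by lia.
  have -> : (L - d - d).-1 + d + d = L.-1 by lia.
  exact: topdig.
split => //.
- lia.
- rewrite leqNgt; apply/negP => hlt; move: htop; by rewrite /dig (divn_small hlt) mod0n.
- move=> i hi; rewrite !hdig.
  case: (ltnP i p) => h1; case: (ltnP (L - d - d - i.+1) p) => h2;
  case: (ltnP (i + d) (L - p')) => h3; case: (ltnP (L - d - d - i.+1 + d) (L - p')) => h4;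
  try (exfalso; lia);
  (rewrite hpal; [congr (dig _ _ _); lia | lia]).
Qed.

Lemma good_of k X : 1 < k -> 0 < X -> palindrome (base_digits k X) -> goodL k (base_len k X) X.
Proof.
move=> hk hX hp.
have hlo := trunc_logP hk hX. have hhi := trunc_log_ltn X hk.
have [hl hpal] := @bd_spec k X _ hk (ltn0Sn _) hlo hhi.
by rewrite hl; split => //; apply/hpal.
Qed.

Lemma pal_of k L X : 1 < k -> goodL k L X ->
  [/\ 0 < X, palindrome (base_digits k X) & base_len k X = L].
Proof.
move=> hk [hL hlo hhi hpal].
have [hl hp] := @bd_spec k X L hk hL hlo hhi.
split => //; last by apply/hp.
by apply: leq_trans hlo; rewrite expn_gt0; lia.
Qed.

Lemma dec N a a' b b' : a < N -> a' < N -> a + N * b = a' + N * b' -> a = a' /\ b = b'.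
Proof.
move=> ha ha' h.
have hN : 0 < N by lia.
have h1 := congr1 (modn^~ N) h. have h2 := congr1 (divn^~ N) h.
rewrite /= ![_ + N * _]addnC ![N * _]mulnC !modnMDl !modn_small // in h1.
rewrite /= ![_ + N * _]addnC ![N * _]mulnC !divnMDl // !divn_small // in h2.
lia.
Qed.

Theorem theorem7 (k N : nat) :
  2 <= k -> 1 <= N -> ~ (N < k) -> ~ (k %| N) ->
  (exists A, good_pair k N A) ->
  forall A, good_pair k N A -> (forall A', good_pair k N A' -> A <= A') ->
  base_len k A <=
    2 * (up_log k N + k ^ (up_log k N) * N ^ 2 + uphalf (up_log k N)) + 1.
Proof.
move=> hk hN hNk hkN _ A [A0 [B [B0 [pA [pB eAB]]]]] hmin.
have hkp : forall t, 0 < k ^ t by move=> t; rewrite expn_gt0; lia.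
set m := up_log k N. have hNm : N <= k ^ m := up_logP N hk.
set S := k ^ m * N ^ 2. set h := uphalf m.
have gA := good_of _ _ hk A0 pA. have gB := good_of _ _ hk B0 pB.
set l := base_len k A in gA *. set n := base_len k B in gB *.
case: gA => hl0 hlA hlA' hpA. case: gB => hn0 hnB hnB' hpB.
rewrite leqNgt; apply/negP => hbig.
have hBA : B <= A by rewrite eAB leq_pmull.
have hnl : n <= l.
  have : k ^ n.-1 < k ^ l by apply: (leq_ltn_trans hnB); exact: (leq_ltn_trans hBA).
  rewrite ltn_exp2l //; lia.
have hln : l <= n + m.
  have : k ^ l.-1 < k ^ (m + n).
    apply: (leq_ltn_trans hlA); rewrite eAB expnD.
    apply: (@leq_ltn_trans (k ^ m * B)); first by rewrite leq_mul2r hNm orbT.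
    by rewrite ltn_mul2l hnB' (hkp m).
  rewrite ltn_exp2l //; lia.
set s := l - n.
pose w P := (A %/ k ^ (n - P)) %% k ^ s.
pose f i := car k N B i.+1 + N * (car k N B (n - i.+1) + N * w i.+1).
have hf : forall i, i <= S -> f i < S.
  move=> i _.
  have c1 := car_lt k N B i.+1 hk hN. have c2 := car_lt k N B (n - i.+1) hk hN.
  have hw : w i.+1 < k ^ m.
    apply: (leq_trans (ltn_pmod _ (hkp s))); rewrite leq_exp2l //; lia.
  have hT : (car k N B (n - i.+1) + N * w i.+1).+1 <= N * k ^ m.
    apply: (@leq_trans (N * (w i.+1).+1)); first by rewrite mulnS -addSn leq_add2r.
    by rewrite leq_mul2l hw orbT.
  rewrite /f /S.
  apply: (@leq_trans (N * (car k N B (n - i.+1) + N * w i.+1).+1)).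
    by rewrite mulnS -addSn leq_add2r.
  apply: (leq_trans (leq_mul (leqnn N) hT)).
  by rewrite mulnA mulnC expnS expn1 mulnA.
have [i [j [/andP [hij hjS] hfij]]] := pigeon _ _ hf.
have [ec1 /(dec _ _ _ _ _ (car_lt _ _ _ _ hk hN) (car_lt _ _ _ _ hk hN)) [ec2 ew]] :=
  dec _ _ _ _ _ (car_lt _ _ _ _ hk hN) (car_lt _ _ _ _ hk hN) hfij.
set p := i.+1 in ec1 ec2 ew. set p' := j.+1 in ec1 ec2 ew.
have hpp : p < p' by [].
have hp'n : 2 * p' <= n by rewrite /p'; lia.
set d := p' - p.
have E1 : cut1 k A (n - p' + s) d = N * cut1 k B (n - p') d.
  apply: cut_mul => //.
  - have -> : n - p' + d = n - p by rewrite /d; lia.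
    by [].
  - have -> : n - p' + d = n - p by rewrite /d; lia.
    by [].
have E2 : cut1 k (cut1 k A (n - p' + s) d) (p + 0) d =
          N * cut1 k (cut1 k B (n - p') d) p d.
  apply: cut_mul => //; first by rewrite !modn1.
  rewrite !car_cut //; try lia.
  by have -> : p + d = p' by rewrite /d; lia.
rewrite addn0 (_ : n - p' + s = l - p') in E2; last by rewrite /s; lia.
have gA' := cut2_good _ _ _ _ _ hk (And4 hl0 hlA hlA' hpA) (ltn0Sn i) hpp (leq_trans hp'n hnl).
have gB' := cut2_good _ _ _ _ _ hk (And4 hn0 hnB hnB' hpB) (ltn0Sn i) hpp hp'n.
have [pa1 pa2 pa3] := pal_of _ _ _ hk gA'. have [pb1 pb2 pb3] := pal_of _ _ _ hk gB'.
have := hmin _ (conj pa1 (ex_intro _ _ (conj pb1 (conj pa2 (conj pb2 E2))))).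
case: gA' => _ _ hlt _.
have : k ^ (l - 2 * (p' - p)) <= k ^ l.-1 by rewrite leq_exp2l //; lia.
move=> h1 h2.
have := leq_ltn_trans h2 (leq_trans hlt h1).
by rewrite ltnNge hlA.
Qed.
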